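(* Let $\overline{SB}$ be the output of Algorithm 1 on $\widetilde G$ and $M$, and let $SB^\ast$ be a minimum satellite bridge for $M$. Then $\overline{SB}$ is a satellite bridge for $M$ and $|N(\overline{SB})|\le \big(3\rho H(\Delta+1)+\rho\big)\,|N(SB^\ast)|$, where $\Delta$ is the maximum degree of $G$, $H(n)=\sum_{k=1}^n 1/k$ is the harmonic number, and $\rho$ is the approximation ratio of the Steiner tree procedure used in Algorithm 1.
   Context: Let $G=(V,E)$ be a finite, simple, undirected, connected graph with $|V|\ge 2$ and maximum degree $\Delta$. Fix a positive integer $K$ and, for every $u\in V$, a nonempty set $\Gamma(u)\subseteq\{1,\dots,K\}$. Let $nb_G(u)$ be the neighbours of $u$ in $G$. For a tree $T$, $N(T)$ and $E(T)$ are its vertex and edge sets. The extended graph $\widetilde G=(\widetilde V,\widetilde E)$ of $G$: (i) initially $\widetilde V=V$, $\widetilde E=\emptyset$; (ii) for each $u\in V$ and each $i\in\bigcup_{v\in nb_G(u)}\Gamma(v)$, add a new vertex $\lambda(u,i)$ (satellite node of $u$; $u$ is its nuclear node); $\Psi(u)$ is the set of satellite nodes of $u$; (iii) for each $u\in V$, join every pair of distinct vertices of $\Psi(u)\cup\{u\}$; (iv) for each edge $\{u,v\}\in E$ (in each orientation $(u,v)$), each $i\in\Gamma(v)$, $j\in\Gamma(u)$, add edges $\{\lambda(u,i),\lambda(v,j)\}$, $\{\lambda(u,i),v\}$, $\{u,\lambda(v,j)\}$. $V_S=\widetilde V\setminus V$ is the set of satellite nodes, $\widetilde G_s$ the subgraph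 of $\widetilde G$ induced by $V_S$, and $nb_{\widetilde G}(x)$ the neighbourhood of $x$ in $\widetilde G$. Given $M\subseteq V$, a satellite bridge is a (nonempty) subtree $SB$ of $\widetilde G$ all of whose vertices are satellite nodes and such that every vertex of $M$ is adjacent in $\widetilde G$ to at least one vertex of $SB$. A minimum satellite bridge is one with the minimum number of vertices. Algorithm 1 (input $\widetilde G$, $M$): set $C=\emptyset$, $UC=M$. While $UC\neq\emptyset$: pick $v\in V_S\setminus C$ maximizing $|nb_{\widetilde G}(v)\cap UC|$ (ties broken arbitrarily), set $C=C\cup\{v\}$ and $UC=UC\setminus nb_{\widetilde G}(v)$. Then compute a tree $ST$ in $\widetilde G_s$ with $C\subseteq N(ST)$ and $|E(ST)|\le\rho\cdot\min\{|E(T')|: T'$ a tree in $\widetilde G_s$ with $C\subseteq N(T')\}$, using a fixed $\rho$-approximation algorithm ($\rho\ge 1$) for the unit-weight Steiner tree problem. Output $\overline{SB}=ST$. *)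

(* Defs.v *)
From HB Require Import structures.
From mathcomp Require Import all_boot all_order all_algebra.
Set Implicit Arguments. Unset Strict Implicit. Unset Printing Implicit Defensive.
Import Order.TTheory GRing.Theory Num.Theory.

Section Extended.
Variables (V : finType) (e : rel V) (K : nat) (Gamma : V -> {set 'I_K}).

(* Vertices of the extended graph live in V + V * 'I_K:
   inl u is the nuclear node u, inr (u,i) is the satellite node lambda(u,i)
   (present only when i is in the union of Gamma over the neighbours of u).
   Colours {1..K} are represented by 'I_K = {0..K-1}. *)
Definition XV : finType := (V + (V * 'I_K))%type.

Definition lam (u : V) (i : 'I_K) : XV := inr (u, i).

Definition nucleus (x : XV) : V :=
  match x with inl u => u | inr (u, _) => u end.

Definition is_sat (x : XV) : bool :=
  match x with
  | inl _ => false
  | inr (u, i) => [exists v, e u v && (i \in Gamma v)]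
  end.

Definition ext_vertex (x : XV) : bool :=
  match x with inl _ => true | inr _ => is_sat x end.

Definition VS : {set XV} := [set x | is_sat x].

(* edges added in step (iv), for the oriented edge (u,v) *)
Definition ext_edge_raw (x y : XV) : bool :=
  [exists u : V, exists v : V, exists i : 'I_K, exists j : 'I_K,
     [&& e u v, i \in Gamma v, j \in Gamma u &
        [|| (x == lam u i) && (y == lam v j),
            (x == lam u i) && (y == inl v) |
            (x == inl u) && (y == lam v j)]]].

(* adjacency in the extended graph: step (iii) cliques on Psi(u) U {u},
   and step (iv) edges (undirected) *)
Definition ext_adj (x y : XV) : bool :=
  (x != y) &&
  [|| [&& ext_vertex x, ext_vertex y & nucleus x == nucleus y],
      ext_edge_raw x y | ext_edge_raw y x].

Definition is_tree_in (W : {set XV}) (N : {set XV}) (E : {set {set XV}}) : Prop :=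
  [/\ N != set0, N \subset W,
      (forall f, f \in E -> exists x y,
          [/\ f = [set x; y], x != y, x \in N, y \in N & ext_adj x y]),
      (forall x y, x \in N -> y \in N ->
          connect (fun a b => [set a; b] \in E) x y) &
      #|E| = (#|N| - 1)%N].

Definition satellite_bridge (M : {set V}) (N : {set XV}) (E : {set {set XV}}) : Prop :=
  is_tree_in VS N E /\
  (forall m, m \in M -> exists2 x, x \in N & ext_adj (inl m) x).

Definition min_satellite_bridge (M : {set V}) (N : {set XV}) (E : {set {set XV}}) : Prop :=
  satellite_bridge M N E /\
  (forall N' E', satellite_bridge M N' E' -> (#|N| <= #|N'|)%N).

(* Greedy phase of Algorithm 1: s lists the chosen nodes in order. *)
Definition uncovered (M : {set V}) (s : seq XV) (t : nat) : {set V} :=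
  [set m in M | ~~ has (ext_adj (inl m)) (take t s)].

Definition gain (M : {set V}) (s : seq XV) (t : nat) (x : XV) : nat :=
  #|[set m in uncovered M s t | ext_adj x (inl m)]|.

Definition greedy_run (M : {set V}) (s : seq XV) : Prop :=
  [/\ uniq s, {subset s <= VS},
      (forall t, (t < size s)%N ->
         uncovered M s t != set0 /\
         (forall v, v \in VS -> v \notin take t s ->
            (gain M s t v <= gain M s t (nth v s t))%N)) &
      uncovered M s (size s) = set0].

Definition steiner_approx (R : realFieldType) (rho : R) (C : {set XV})
    (N : {set XV}) (E : {set {set XV}}) : Prop :=
  [/\ is_tree_in VS N E, C \subset N &
      forall N' E', is_tree_in VS N' E' -> C \subset N' ->
        (#|E|%:R <= rho * #|E'|%:R)%R].

End Extended.

Definition max_degree (V : finType) (e : rel V) : nat :=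
  \max_(u : V) #|[set v | e u v]|.

Definition harmonic (R : realFieldType) (n : nat) : R :=
  (\sum_(1 <= k < n.+1) (k%:R)^-1)%R.

(* Main.v *)
Require Import Defs.
From HB Require Import structures.
From mathcomp Require Import all_boot all_order all_algebra.
Import Order.TTheory GRing.Theory Num.Theory.
Module M_G1.
Set Implicit Arguments. Unset Strict Implicit. Unset Printing Implicit Defensive.

Section G.
Variables (V : finType) (e : rel V) (K : nat) (Gamma : V -> {set 'I_K}).
Hypothesis esym : symmetric e.
Hypothesis eirr : irreflexive e.
Hypothesis Gne : forall u, Gamma u != set0.

Lemma ext_adj_sym (x y : XV V K) : ext_adj e Gamma x y = ext_adj e Gamma y x.
Proof.
rewrite /ext_adj eq_sym; congr (_ && _).
rewrite (eq_sym (nucleus x)) andbCA; congr (_ || _); by rewrite orbC.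
Qed.

Lemma adj_lam_inl u i m : ext_adj e Gamma (lam u i) (inl m) ->
  m = u \/ (e u m /\ i \in Gamma m).
Proof.
case/andP=> _ /or3P[|h|h].
- by case/and3P=> _ _ /eqP /= ->; left.
- move: h; case/existsP=> u' /existsP[v /existsP[i' /existsP[j /and4P[euv iv ju]]]].
  case/or3P=> /andP[/eqP h1 /eqP h2] //; case: h1 h2 => -> -> [->]; by right.
- move: h; case/existsP=> u' /existsP[v /existsP[i' /existsP[j /and4P[euv iv ju]]]].
  case/or3P=> /andP[/eqP h1 /eqP h2] //; case: h1 h2 => -> [-> ->]; right.
  by rewrite esym.
Qed.

Lemma is_sat_lam m u a : e m u -> a \in Gamma u -> is_sat e Gamma (lam m a).
Proof. by move=> emu au; apply/existsP; exists u; rewrite emu. Qed.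

Lemma adj_lam_lam u v i j : e u v -> i \in Gamma v -> j \in Gamma u ->
  ext_adj e Gamma (lam u i) (lam v j).
Proof.
move=> euv iv ju; apply/andP; split.
  apply/negP=> /eqP [uv _]; by rewrite uv eirr in euv.
apply/or3P; apply: Or32; apply/existsP; exists u; apply/existsP; exists v.
apply/existsP; exists i; apply/existsP; exists j; by rewrite euv iv ju !eqxx.
Qed.

Lemma adj_clique m a b : is_sat e Gamma (lam m a) -> is_sat e Gamma (lam m b) ->
  lam m a != lam m b -> ext_adj e Gamma (lam m a) (lam m b).
Proof. by move=> ha hb nab; rewrite /ext_adj nab /=; move: ha hb; rewrite /lam /= => -> ->; rewrite eqxx. Qed.


Lemma tree_ext (W N : {set XV V K}) (E : {set {set XV V K}}) x y :
  is_tree_in e Gamma W N E -> x \in N -> y \in W ->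
  x = y \/ ext_adj e Gamma x y ->
  exists N' E', [/\ is_tree_in e Gamma W N' E', N \subset N', y \in N' &
     (#|E'| <= #|E|.+1)%N].
Proof.
move=> T xN yW hxy.
case: (boolP (y \in N)) => yN.
  by exists N, E; split=> //; apply: leqnSn.
case: hxy => [xy|axy]; first by rewrite -xy xN in yN.
case: T => Nne NW Eok Econ Ecard.
have nE : [set x; y] \notin E.
  apply/negP=> /Eok [a [b [hab _ aN bN _]]].
  have : y \in [set a; b] by rewrite -hab !inE eqxx orbT.
  by rewrite !inE => /orP[/eqP ya|/eqP yb]; [rewrite ya aN in yN|rewrite yb bN in yN].
exists (y |: N), ([set x; y] |: E); split; [split| | |].
- by apply/set0Pn; exists y; rewrite !inE eqxx.
- by rewrite subUset sub1set yW NW.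
- move=> f; rewrite !inE => /orP[/eqP->|fE].
    exists x, y; split=> //; last by rewrite !inE eqxx.
      apply/negP=> /eqP xy; by rewrite -xy xN in yN.
    by rewrite !inE xN orbT.
  case: (Eok f fE) => a [b [-> ab aN bN adj]].
  by exists a, b; split=> //; rewrite inE ?aN ?bN orbT.
- have sub : forall a b, connect (fun a b => [set a; b] \in E) a b ->
      connect (fun a b => [set a; b] \in [set x; y] |: E) a b.
    move=> a b; apply: connect_sub => c d cd.
    by apply: connect1; rewrite inE cd orbT.
  have cxy : connect (fun a b => [set a; b] \in [set x; y] |: E) x y.
    by apply: connect1; rewrite !inE eqxx.
  have cyx : connect (fun a b => [set a; b] \in [set x; y] |: E) y x.
    by apply: connect1; rewrite setUC !inE eqxx.
  move=> a b; rewrite !inE => /orP[/eqP->|aN] /orP[/eqP->|bN].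
  + exact: connect0.
  + exact: connect_trans cyx (sub _ _ (Econ _ _ xN bN)).
  + exact: connect_trans (sub _ _ (Econ _ _ aN xN)) cxy.
  + exact: sub _ _ (Econ _ _ aN bN).
- have hE := cardsU1 [set x; y] E; rewrite nE in hE.
  have hN := cardsU1 y N; rewrite yN in hN.
  rewrite hE hN Ecard /= add1n subn1 /= subn1 prednK ?card_gt0 //.
- by apply/subsetP=> z zN; rewrite inE zN orbT.
- by rewrite !inE eqxx.
- have hE := cardsU1 [set x; y] E; rewrite nE in hE; by rewrite hE.
Qed.

End G.
End M_G1.
Import M_G1.
Module M_H1.
Set Implicit Arguments. Unset Strict Implicit. Unset Printing Implicit Defensive.

Section H.
Variable R : realFieldType.
Local Open Scope ring_scope.

Lemma harm_split (a b : nat) : (b <= a)%N ->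
  harmonic R a = harmonic R b + \sum_(b.+1 <= k < a.+1) (k%:R)^-1.
Proof.
by move=> ba; rewrite /harmonic (@big_cat_nat _ _ _ b.+1) //= ltnS.
Qed.

Lemma harm_ge0 n : 0 <= harmonic R n.
Proof. by rewrite /harmonic; apply: sumr_ge0 => k _; rewrite invr_ge0 ler0n. Qed.

Lemma harm_mono a b : (b <= a)%N -> harmonic R b <= harmonic R a.
Proof.
move=> ba; rewrite (harm_split ba) lerDl; apply: sumr_ge0 => k _.
by rewrite invr_ge0 ler0n.
Qed.

Lemma harm_diff (a b : nat) : (b <= a)%N -> (0 < a)%N ->
  (a - b)%:R / a%:R <= harmonic R a - harmonic R b.
Proof.
move=> ba a0; rewrite (harm_split ba) addrAC subrr add0r.
have -> : (a - b)%:R / a%:R = \sum_(b.+1 <= k < a.+1) (a%:R : R)^-1.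
  by rewrite sumr_const_nat subSS mulrC mulr_natr.
apply: ler_sum_nat => k /andP[bk ka].
have k0 : (0 < k)%N by apply: leq_ltn_trans bk.
rewrite lef_pV2 ?posrE ?ltr0n // ler_nat -ltnS //.
Qed.

Lemma harm_step (a b d g : nat) : (b + d)%N = a -> (0 < g)%N ->
  ((0 < d)%N -> (a <= g)%N) ->
  d%:R / g%:R <= harmonic R a - harmonic R b.
Proof.
move=> <- g0 hd; case: (posnP d) => [->|d0].
  by rewrite mul0r addn0 subrr.
have ag := hd d0.
apply: le_trans (_ : d%:R / (b + d)%:R <= _).
  rewrite ler_pM2l ?ltr0n // lef_pV2 ?posrE ?ltr0n ?ler_nat //.
  by rewrite addn_gt0 d0 orbT.
have bbd : (b <= b + d)%N by rewrite leq_addr.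
have := harm_diff bbd; rewrite addKn; apply.
by rewrite addn_gt0 d0 orbT.
Qed.
End H.
End M_H1.
Import M_H1.
Module M_G2.
Set Implicit Arguments. Unset Strict Implicit. Unset Printing Implicit Defensive.

Section Greedy.
Variables (V : finType) (e : rel V) (K : nat) (Gamma : V -> {set 'I_K}).
Hypothesis esym : symmetric e.
Variables (M : {set V}) (s : seq (XV V K)).
Local Notation adj := (ext_adj e Gamma).
Local Notation U t := (uncovered e Gamma M s t).

Definition Dset d t := [set m in U t | adj (inl m) (nth d s t)].

Lemma U_step d t : (t < size s)%N ->
  U t.+1 = [set m in U t | ~~ adj (inl m) (nth d s t)].
Proof.
move=> ts; apply/setP=> m; rewrite !inE (take_nth d ts) has_rcons.
by case: (m \in M); case: (adj _ _); case: (has _ _).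
Qed.

Lemma gain_split x d t : (t < size s)%N ->
  gain e Gamma M s t x =
  (gain e Gamma M s t.+1 x + #|[set m in Dset d t | adj x (inl m)]|)%N.
Proof.
move=> ts; rewrite /gain -(cardsID [set m | adj (inl m) (nth d s t)]
   [set m in U t | adj x (inl m)]) addnC; congr (_ + _)%N; rewrite ?(U_step d ts);
  apply: eq_card => m; rewrite !inE.
  by case: (m \in M); case: (adj (inl m) _); case: (adj x _); case: (has _ _).
by case: (m \in M); case: (adj (inl m) _); case: (adj x _); case: (has _ _).
Qed.

Lemma gain_self d t : gain e Gamma M s t (nth d s t) = #|Dset d t|.
Proof.
rewrite /gain /Dset; apply: eq_card => m; rewrite !inE.
by rewrite (ext_adj_sym e Gamma (inl m)).
Qed.

Lemma card_as_sum (A : {set V}) (P : pred V) :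
  #|[set m in A | P m]| = (\sum_(m in A) (P m : nat))%N.
Proof.
rewrite -sum1_card [LHS]big_mkcond [RHS]big_mkcond; apply: eq_bigr => m _.
by rewrite !inE; case: (m \in A); case: (P m).
Qed.

Variable Nopt : {set XV V K}.
Hypothesis hcov : forall m, m \in M -> exists2 x, x \in Nopt & adj (inl m) x.

Lemma union_bound d t :
  (#|Dset d t| <= \sum_(x in Nopt) #|[set m in Dset d t | adj x (inl m)]|)%N.
Proof.
under eq_bigr => x _ do rewrite card_as_sum.
rewrite exchange_big /= -sum1_card; apply: leq_sum => m.
rewrite !inE => /andP[/andP[mM _] _].
case: (hcov mM) => x xN ax.
rewrite (bigD1 x) //= (ext_adj_sym e Gamma x) ax; exact: leq_addr.
Qed.

Lemma not_in_take x t :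
  (0 < gain e Gamma M s t x)%N -> x \notin take t s.
Proof.
rewrite /gain card_gt0 => /set0Pn [m]; rewrite !inE => /andP[/andP[_ hm] axm].
apply/negP=> xt; move/negP: hm; apply; apply/hasP; exists x => //.
by rewrite ext_adj_sym.
Qed.


Lemma deg_bound x : x \in VS e Gamma ->
  (#|[set m | adj x (inl m)]| <= max_degree e + 1)%N.
Proof.
rewrite inE; case: x => [//|[u i]] _.
have sub : [set m | adj (inr (u, i)) (inl m)] \subset u |: [set v | e u v].
  apply/subsetP=> m; rewrite !inE => /(adj_lam_inl esym) [->|[h _]].
    by rewrite eqxx.
  by rewrite h orbT.
apply: leq_trans (subset_leq_card sub) _.
rewrite cardsU1 addnC leq_add //; last by case: (_ \notin _).
rewrite /max_degree; exact: (@leq_bigmax V (fun w => #|[set v | e w v]|) u).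
Qed.

Lemma gain_le_deg x t : x \in VS e Gamma ->
  (gain e Gamma M s t x <= max_degree e + 1)%N.
Proof.
move=> xV; apply: leq_trans (deg_bound xV); apply: subset_leq_card.
by apply/subsetP=> m; rewrite !inE => /andP[].
Qed.

Local Open Scope ring_scope.
Lemma greedy_bound (R : realFieldType) :
  greedy_run e Gamma M s -> Nopt \subset VS e Gamma ->
  ((size s)%:R <= #|Nopt|%:R * harmonic R (max_degree e + 1) :> R)%R.
Proof.
move=> GR NV; case: (posnP (size s)) => [->|spos].
  by rewrite mulr_ge0 ?ler0n ?harm_ge0.
have [d _] : exists d : XV V K, true.
  by move: spos; case: s => [//|d s'] _; exists d.
set T := size s.
case: GR => _ _ Hg _.
have Hgr : forall t x, (t < T)%N -> x \in VS e Gamma -> x \notin take t s ->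
    (gain e Gamma M s t x <= #|Dset d t|)%N.
  move=> t x ts xV xt; case: (Hg t ts) => _ /(_ x xV xt).
  by rewrite (set_nth_default d x ts) gain_self.
have g0 : forall t, (t < T)%N -> (0 < #|Dset d t|)%N.
  move=> t ts; case: (Hg t ts) => /set0Pn [m mU] _.
  move: (mU); rewrite inE => /andP[mM hm].
  case: (hcov mM) => x xN ax.
  have xV : x \in VS e Gamma by apply: (subsetP NV).
  have xt : x \notin take t s.
    apply/negP=> xt; move/negP: hm; apply; apply/hasP; by exists x.
  apply: leq_trans (Hgr t x ts xV xt); rewrite /gain card_gt0.
  by apply/set0Pn; exists m; rewrite inE mU /= ext_adj_sym.
have F2 : forall x t, x \in Nopt -> (t < T)%N ->
    (0 < #|[set m in Dset d t | adj x (inl m)]|)%N ->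
    (gain e Gamma M s t x <= #|Dset d t|)%N.
  move=> x t xN ts dpos; apply: Hgr => //; first by apply: (subsetP NV).
  apply: not_in_take; rewrite (gain_split x d ts).
  by apply: leq_trans dpos _; rewrite leq_addl.
have -> : ((size s)%:R : R) = \sum_(0 <= t < T) (#|Dset d t|%:R / #|Dset d t|%:R).
  rewrite (_ : (size s)%:R = \sum_(0 <= t < T) (1:R)); last first.
    by rewrite sumr_const_nat subn0.
  apply: eq_big_nat => t /andP[_ ts]; rewrite mulfV // pnatr_eq0 -lt0n g0 //.
apply: (@le_trans _ _ (\sum_(0 <= t < T) \sum_(x in Nopt)
    (#|[set m in Dset d t | adj x (inl m)]|%:R / #|Dset d t|%:R) : R)).
  apply: ler_sum_nat => t /andP[_ ts]; rewrite -mulr_suml -natr_sum.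
  by rewrite ler_wpM2r ?invr_ge0 ?ler0n ?ler_nat ?union_bound.
rewrite exchange_big /=.
apply: (@le_trans _ _ (\sum_(x in Nopt) harmonic R (max_degree e + 1) : R)); last first.
  by rewrite sumr_const mulr_natl.
apply: ler_sum => x xN.
apply: (@le_trans _ _ (\sum_(0 <= t < T)
   (harmonic R (gain e Gamma M s t x) - harmonic R (gain e Gamma M s t.+1 x)) : R)).
  apply: ler_sum_nat => t /andP[_ ts]; apply: harm_step.
  - by rewrite (gain_split x d ts).
  - exact: g0.
  - exact: F2.
have -> : \sum_(0 <= t < T)
   (harmonic R (gain e Gamma M s t x) - harmonic R (gain e Gamma M s t.+1 x)) =
   harmonic R (gain e Gamma M s 0 x) - harmonic R (gain e Gamma M s T x).
  rewrite -(opprB (harmonic R (gain e Gamma M s T x))).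
  rewrite -(telescope_sumr (fun t => harmonic R (gain e Gamma M s t x))) //.
  rewrite -sumrN; apply: eq_bigr => t _; by rewrite opprB.
apply: (@le_trans _ _ (harmonic R (gain e Gamma M s 0 x))).
  by rewrite gerBl harm_ge0.
apply: harm_mono; apply: gain_le_deg; exact: (subsetP NV).
Qed.

End Greedy.
End M_G2.
Import M_G2.
Module M_G3.
Set Implicit Arguments. Unset Strict Implicit. Unset Printing Implicit Defensive.

Section Steiner.
Variables (V : finType) (e : rel V) (K : nat) (Gamma : V -> {set 'I_K}).
Hypothesis esym : symmetric e.
Hypothesis eirr : irreflexive e.
Hypothesis Gne : forall u, Gamma u != set0.
Local Notation adj := (ext_adj e Gamma).
Variables (M : {set V}) (Nopt : {set XV V K}) (Eopt : {set {set XV V K}}).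
Hypothesis SB : satellite_bridge e Gamma M Nopt Eopt.

Lemma sat_near (x : XV V K) m : x \in VS e Gamma -> adj x (inl m) ->
  exists a, is_sat e Gamma (lam m a) /\ (x = lam m a \/ adj x (lam m a)).
Proof.
rewrite inE; case: x => [//|[u i]] sx /(adj_lam_inl esym) [->|[eum im]].
  by exists i; split=> //; left.
case/set0Pn: (Gne u) => a au.
exists a; split; first by apply: (is_sat_lam (u:=u)); rewrite // esym.
by right; apply: adj_lam_lam.
Qed.

Lemma path3 c m : c \in VS e Gamma -> m \in M -> adj c (inl m) ->
  exists x y2 y1, [/\ x \in Nopt, y2 \in VS e Gamma & y1 \in VS e Gamma] /\
    [/\ x = y2 \/ adj x y2, y2 = y1 \/ adj y2 y1 & y1 = c \/ adj y1 c].
Proof.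
move=> cV mM acm.
case: SB => [[_ NV _ _ _] cov].
case: (cov m mM) => x xN amx.
have xV : x \in VS e Gamma by apply: (subsetP NV).
case: (sat_near cV acm) => a [sa hc].
case: (sat_near xV (_ : adj x (inl m))) => [|b [sb hx]].
  by rewrite ext_adj_sym.
exists x, (lam m b), (lam m a); split; split=> //; rewrite ?inE //.
- case: (eqVneq (lam m b) (lam m a)) => [->|nab]; first by left.
  by right; apply: adj_clique.
- case: hc => [->|h]; [by left|right]; by rewrite ext_adj_sym.
Qed.

Lemma build (l : seq (XV V K)) :
  {subset l <= VS e Gamma} ->
  (forall c, c \in l -> exists2 m, m \in M & adj c (inl m)) ->
  exists N' E', [/\ is_tree_in e Gamma (VS e Gamma) N' E', Nopt \subset N',
     {subset l <= N'} & (#|E'| <= #|Eopt| + 3 * size l)%N].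
Proof.
elim: l => [|c l IH] lV lM.
  exists Nopt, Eopt; split=> //; last by rewrite muln0 addn0.
  by case: SB.
have [N1 [E1 [T1 sub1 l1 c1]]] : exists N' E', [/\ is_tree_in e Gamma (VS e Gamma) N' E', Nopt \subset N',
     {subset l <= N'} & (#|E'| <= #|Eopt| + 3 * size l)%N].
  apply: IH => [z zl|z zl]; [apply: lV | apply: lM]; by rewrite inE zl orbT.
have cV : c \in VS e Gamma by apply: lV; rewrite inE eqxx.
case: (lM c (mem_head _ _)) => m mM acm.
case: (path3 cV mM acm) => x [y2 [y1 [[xN y2V y1V] [h1 h2 h3]]]].
have xN1 : x \in N1 by apply: (subsetP sub1).
case: (tree_ext T1 xN1 y2V h1) => N2 [E2 [T2 s12 y2N2 c2]].
case: (tree_ext T2 y2N2 y1V h2) => N3 [E3 [T3 s23 y1N3 c3]].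
case: (tree_ext T3 y1N3 cV h3) => N4 [E4 [T4 s34 cN4 c4]].
exists N4, E4; split=> //.
- by apply: subset_trans sub1 _; apply: subset_trans s12 _; apply: subset_trans s23 _.
- move=> z; rewrite inE => /orP[/eqP->//|zl].
  apply: (subsetP s34); apply: (subsetP s23); apply: (subsetP s12); exact: l1.
- apply: leq_trans c4 _; apply: leq_trans (_ : #|E1| + 3 <= _)%N.
    by rewrite addn3 !ltnS (leq_trans c3) // ltnS (leq_trans c2).
  by rewrite /= mulnS addnCA [(#|E1| + 3)%N]addnC leq_add2l.
Qed.

End Steiner.
End M_G3.
Import M_G3.

Theorem theorem2 (R : realFieldType) (V : finType) (e : rel V) (K : nat)
  (Gamma : V -> {set 'I_K}) (rho : R) (M : {set V})
  (s : seq (XV V K)) (N : {set XV V K}) (E : {set {set XV V K}})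
  (Nopt : {set XV V K}) (Eopt : {set {set XV V K}}) :
  symmetric e -> irreflexive e ->
  (forall u v, connect e u v) -> (1 < #|V|)%N ->
  (forall u, Gamma u != set0) ->
  (1 <= rho)%R ->
  greedy_run e Gamma M s ->
  steiner_approx e Gamma rho [set x in s] N E ->
  min_satellite_bridge e Gamma M Nopt Eopt ->
  satellite_bridge e Gamma M N E /\
  (#|N|%:R <= (3%:R * rho * harmonic R (max_degree e + 1) + rho) * #|Nopt|%:R)%R.
Proof.
move=> esym eirr _ _ Gne rho1 GR ST [SBopt _].
have GR' := GR.
case: GR' => us sVS Hg Uend.
case: ST => TN CN Hst.
have SBopt' := SBopt.
case: SBopt' => [[Nne NV _ _ Ecopt] hcov].
split.
  split=> // m mM.
  have : m \notin uncovered e Gamma M s (size s) by rewrite Uend inE.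
  rewrite inE mM /= negbK take_size => /hasP [x xs ax].
  by exists x => //; apply: (subsetP CN); rewrite inE.
have gb := greedy_bound esym hcov R GR NV.
have cov : forall c, c \in s -> exists2 m, m \in M & ext_adj e Gamma c (inl m).
  move=> c cs; set t := index c s.
  have ts : (t < size s)%N by rewrite index_mem.
  case: (Hg t ts) => /set0Pn [m mU] Hv.
  move: (mU); rewrite inE => /andP[mM hm].
  case: (hcov m mM) => x xN ax.
  have xV : x \in VS e Gamma by apply: (subsetP NV).
  have xt : x \notin take t s.
    apply/negP=> xt; move/negP: hm; apply; apply/hasP; by exists x.
  have := Hv x xV xt; rewrite (set_nth_default c x ts) nth_index //.
  have : (0 < gain e Gamma M s t x)%N.
    rewrite /gain card_gt0; apply/set0Pn; exists m.
    by rewrite inE mU /= ext_adj_sym.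
  move=> g1 g2; have := leq_trans g1 g2; rewrite /gain card_gt0.
  case/set0Pn => m' ; rewrite !inE => /andP[/andP[m'M _] a'].
  by exists m'.
case: (build esym eirr Gne SBopt sVS cov) => N' [E' [T' sub' sN' cE']].
have CN' : [set x in s] \subset N' by apply/subsetP=> z; rewrite inE; apply: sN'.
have hE := Hst N' E' T' CN'.
case: TN => N0 _ _ _ EcN.
have nN : #|N| = (#|E| + 1)%N by rewrite EcN subn1 addn1 prednK // card_gt0.
have nE' : (#|E'| + 1 <= #|Nopt| + 3 * size s)%N.
  rewrite -(leq_add2r 1) in cE'; apply: leq_trans cE' _.
  by rewrite Ecopt -addnA (addnC _ 1) addnA subn1 addn1 prednK // card_gt0.
have rho0 : (0 <= rho)%R by apply: le_trans rho1.
rewrite nN natrD.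
apply: (@le_trans _ _ (rho * #|E'|%:R + rho * 1)%R).
  by rewrite lerD // mulr1.
rewrite -mulrDr.
apply: (@le_trans _ _ (rho * (#|Nopt| + 3 * size s)%N%:R)%R).
  have -> : (#|E'|%:R + 1 = (#|E'| + 1)%N%:R :> R)%R by rewrite natrD.
  by rewrite ler_wpM2l // ler_nat.
rewrite natrD natrM.
apply: (@le_trans _ _ (rho * (#|Nopt|%:R + 3%:R * (#|Nopt|%:R * harmonic R (max_degree e + 1))))%R).
  by rewrite ler_wpM2l // lerD2l ler_wpM2l.
set k := (#|Nopt|%:R : R)%R; set h := harmonic R _.
have -> : (rho * (k + 3%:R * (k * h)) = (3%:R * rho * h + rho) * k)%R.
  rewrite mulrDr [RHS]mulrDl addrC; congr (_ + _)%R.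
  by rewrite mulrCA -!mulrA (mulrC k).
exact: lexx.
Qed.
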